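(* Let $S$ and $R'$ be the maps $S:(q_1,p_1,q_2,p_2,t,s)\mapsto\big(q_1+\frac{q_2p_2+\alpha_1}{p_1},p_1,\frac{p_2}{p_1},-q_2p_1,t,\frac{t}{s}\big)$ and $R':(q_1,p_1,q_2,p_2,t,s)\mapsto\big(-\frac{p_1}{p_2},q_1p_2,q_2+\frac{q_1p_1-\alpha_1}{p_2},p_2,\frac{s}{t},s\big)$. Then the composition $R'\circ S$ (first $S$, then $R'$) is $$(q_1,p_1,q_2,p_2,t,s;\alpha_1,\dots,\alpha_6)\mapsto\Big(\frac{1}{q_2},-(q_1p_1+q_2p_2+\alpha_1)q_2,-\frac{q_1}{q_2},-p_1q_2,\frac{1}{s},\frac{t}{s};\alpha_1,\alpha_4,\alpha_2,\alpha_3,\alpha_5,\alpha_6\Big),$$ and this map is a Bäcklund transformation of the Garnier system in two variables: it maps solutions of the Garnier system with parameters $(\alpha_1,\dots,\alpha_6)$ to solutions of the Garnier system with parameters $(\alpha_1,\alpha_4,\alpha_2,\alpha_3,\alpha_5,\alpha_6)$.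
   Context: Parameters $\alpha_1,\dots,\alpha_6\in\mathbb{C}$ with $2\alpha_1+\alpha_2+\dots+\alpha_6=1$. $H_{VI}(q,p,t;a_0,a_1,a_2,a_3,a_4)=\frac{1}{t(t-1)}\big[p^2(q-t)(q-1)q-\{(a_0-1)(q-1)q+a_3(q-t)q+a_4(q-t)(q-1)\}p+a_2(a_1+a_2)(q-t)\big]$. The Garnier system in two variables is $dq_j=\frac{\partial H_1}{\partial p_j}dt+\frac{\partial H_2}{\partial p_j}ds$, $dp_j=-\frac{\partial H_1}{\partial q_j}dt-\frac{\partial H_2}{\partial q_j}ds$ ($j=1,2$) with $H_1=H_{VI}(q_1,p_1,t;\alpha_4+\alpha_6,\alpha_2,\alpha_1,\alpha_5,\alpha_3)+(2\alpha_1+\alpha_2)\frac{q_1q_2p_2}{t(t-1)}+\alpha_3\Big\{\frac{p_1}{t-s}-\frac{(s-1)p_2}{(t-s)(t-1)}\Big\}q_2+\alpha_4\frac{s(p_2-p_1)q_1}{t(t-s)}+\Big\{\frac{2(s-1)p_1p_2}{(t-s)(t-1)}-\frac{tp_1^2+sp_2^2}{t(t-s)}+\frac{(2q_1p_1+q_2p_2)p_2}{t(t-1)}\Big\}q_1q_2$, and $H_2$ obtained from $H_1$ by $q_1\leftrightarrow q_2$, $p_1\leftrightarrow p_2$, $t\leftrightarrow s$, $\alpha_3\leftrightarrow\alpha_4$. *)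

(* Defs.v *)
From HB Require Import structures.
From mathcomp Require Import all_boot all_order all_algebra.
From mathcomp Require Import all_classical all_reals all_analysis.
Set Implicit Arguments. Unset Strict Implicit. Unset Printing Implicit Defensive.
Import Order.TTheory GRing.Theory Num.Theory.
Import numFieldNormedType.Exports.
Local Open Scope ring_scope.
Local Open Scope classical_set_scope.

Record phase (K : Type) := Phase {
  c_q1 : K; c_p1 : K; c_q2 : K; c_p2 : K; c_t : K; c_s : K }.

Section Garnier.
Variable K : numClosedFieldType.

Definition HVI (q p t a0 a1 a2 a3 a4 : K) : K :=
  (p ^+ 2 * (q - t) * (q - 1) * q
   - ((a0 - 1) * (q - 1) * q + a3 * (q - t) * q + a4 * (q - t) * (q - 1)) * p
   + a2 * (a1 + a2) * (q - t)) / (t * (t - 1)).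

Definition H1 (a1 a2 a3 a4 a5 a6 : K) (q1 p1 q2 p2 t s : K) : K :=
  HVI q1 p1 t (a4 + a6) a2 a1 a5 a3
  + (2 * a1 + a2) * (q1 * q2 * p2 / (t * (t - 1)))
  + a3 * (p1 / (t - s) - (s - 1) * p2 / ((t - s) * (t - 1))) * q2
  + a4 * (s * (p2 - p1) * q1 / (t * (t - s)))
  + (2 * (s - 1) * p1 * p2 / ((t - s) * (t - 1))
     - (t * p1 ^+ 2 + s * p2 ^+ 2) / (t * (t - s))
     + (2 * q1 * p1 + q2 * p2) * p2 / (t * (t - 1))) * q1 * q2.

Definition H2 (a1 a2 a3 a4 a5 a6 : K) (q1 p1 q2 p2 t s : K) : K :=
  H1 a1 a2 a4 a3 a5 a6 q2 p2 q1 p1 s t.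

Definition dq1 (H : K -> K -> K -> K -> K -> K -> K) (q1 p1 q2 p2 t s : K) :=
  'D_1 (fun y : K => H y p1 q2 p2 t s) q1.
Definition dp1 (H : K -> K -> K -> K -> K -> K -> K) (q1 p1 q2 p2 t s : K) :=
  'D_1 (fun y : K => H q1 y q2 p2 t s) p1.
Definition dq2 (H : K -> K -> K -> K -> K -> K -> K) (q1 p1 q2 p2 t s : K) :=
  'D_1 (fun y : K => H q1 p1 y p2 t s) q2.
Definition dp2 (H : K -> K -> K -> K -> K -> K -> K) (q1 p1 q2 p2 t s : K) :=
  'D_1 (fun y : K => H q1 p1 q2 y t s) p2.

Definition garnier_domain : set (K * K) :=
  [set x | [/\ x.1 != 0, x.1 != 1, x.2 != 0, x.2 != 1 & x.1 != x.2]].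

Definition garnier_solution (a1 a2 a3 a4 a5 a6 : K) (U : set (K * K))
    (q1 p1 q2 p2 : K * K -> K) : Prop :=
  [/\ open U, U `<=` garnier_domain &
   forall x : K * K, U x ->
     let h1 := H1 a1 a2 a3 a4 a5 a6 in
     let h2 := H2 a1 a2 a3 a4 a5 a6 in
     let et : K * K := (1, 0) in
     let es : K * K := (0, 1) in
     let Q1 := q1 x in let P1 := p1 x in let Q2 := q2 x in let P2 := p2 x in
     [/\ [/\ differentiable q1 x, differentiable p1 x,
            differentiable q2 x & differentiable p2 x],
      [/\ 'D_et q1 x = dp1 h1 Q1 P1 Q2 P2 x.1 x.2,
          'D_et p1 x = - dq1 h1 Q1 P1 Q2 P2 x.1 x.2,
          'D_et q2 x = dp2 h1 Q1 P1 Q2 P2 x.1 x.2 &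
          'D_et p2 x = - dq2 h1 Q1 P1 Q2 P2 x.1 x.2] &
      [/\ 'D_es q1 x = dp1 h2 Q1 P1 Q2 P2 x.1 x.2,
          'D_es p1 x = - dq1 h2 Q1 P1 Q2 P2 x.1 x.2,
          'D_es q2 x = dp2 h2 Q1 P1 Q2 P2 x.1 x.2 &
          'D_es p2 x = - dq2 h2 Q1 P1 Q2 P2 x.1 x.2]]].

Definition S_map (a1 : K) (x : phase K) : phase K :=
  let: Phase q1 p1 q2 p2 t s := x in
  Phase (q1 + (q2 * p2 + a1) / p1) p1 (p2 / p1) (- (q2 * p1)) t (t / s).

Definition R'_map (a1 : K) (x : phase K) : phase K :=
  let: Phase q1 p1 q2 p2 t s := x in
  Phase (- (p1 / p2)) (q1 * p2) (q2 + (q1 * p1 - a1) / p2) p2 (s / t) s.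

Definition BT (a1 : K) (x : phase K) : phase K :=
  let: Phase q1 p1 q2 p2 t s := x in
  Phase (1 / q2) (- ((q1 * p1 + q2 * p2 + a1) * q2)) (- (q1 / q2))
        (- (p1 * q2)) (1 / s) (t / s).

(* Old time variables (t,s) expressed through the new ones (T,S) = (1/s, t/s):
   t = S/T, s = 1/T. *)
Definition old_time (y : K * K) : K * K := (y.2 / y.1, 1 / y.1).

Definition BT_sol (a1 : K) (q1 p1 q2 p2 : K * K -> K) (y : K * K) : phase K :=
  let x := old_time y in BT a1 (Phase (q1 x) (p1 x) (q2 x) (p2 x) x.1 x.2).

Definition BT_dom (U : set (K * K)) (q2 : K * K -> K) : set (K * K) :=
  [set y | y.1 != 0 /\ U (old_time y) /\ q2 (old_time y) != 0].

End Garnier.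

(* Main.v *)
Require Import Defs.
From HB Require Import structures.
From mathcomp Require Import all_boot all_order all_algebra.
From mathcomp Require Import all_classical all_reals all_analysis.
From mathcomp Require Import ring lra.
Import Order.TTheory GRing.Theory Num.Theory.
Import numFieldNormedType.Exports.
Set Implicit Arguments. Unset Strict Implicit. Unset Printing Implicit Defensive.
Local Open Scope ring_scope.
Local Open Scope classical_set_scope.

Section S.
Variable K : numClosedFieldType.
Context {V : normedModType K}.

Definition ID (x v : V) (f : V -> K) (df : K) := derivable f x v /\ 'D_v f x = df.

Lemma ID_is (x v : V) f df : ID x v f df -> is_derive x v f df.
Proof. by case=> h e; apply: DeriveDef. Qed.
Lemma is_ID (x v : V) f df : is_derive x v f df -> ID x v f df.
Proof. by case=> h e; split. Qed.

Lemma isd_eq (x v : V) (f : V -> K) df df' :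
  ID x v f df -> df = df' -> ID x v f df'.
Proof. by move=> h <-. Qed.
Lemma isd_cst (x v : V) (c : K) : ID x v (fun _ => c) 0.
Proof. apply: is_ID; exact: is_derive_cst. Qed.
Lemma isd_add (x v : V) (f g : V -> K) df dg :
  ID x v f df -> ID x v g dg -> ID x v (fun y => f y + g y) (df + dg).
Proof. move=> /ID_is hf /ID_is hg; apply: is_ID; exact: is_deriveD. Qed.
Lemma isd_opp (x v : V) (f : V -> K) df :
  ID x v f df -> ID x v (fun y => - f y) (- df).
Proof. move=> /ID_is hf; apply: is_ID; exact: is_deriveN. Qed.
Lemma isd_mul (x v : V) (f g : V -> K) df dg :
  ID x v f df -> ID x v g dg -> ID x v (fun y => f y * g y) (f x * dg + g x * df).
Proof. move=> /ID_is hf /ID_is hg; apply: is_ID; exact: is_deriveM. Qed.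
Lemma isd_inv (x v : V) (f : V -> K) df : f x != 0 ->
  ID x v f df -> ID x v (fun y => (f y)^-1) (- df / (f x)^+2).
Proof.
move=> fx [d e]; split; first exact: derivableV.
rewrite deriveV // e; change (- (f x ^- 2) * (df : K) = - (df : K) / f x ^+ 2).
by rewrite mulrC mulrN mulNr.
Qed.
Lemma isd_exp2 (x v : V) (f : V -> K) df :
  ID x v f df -> ID x v (fun y => (f y)^+2) (2 * f x * df).
Proof.
move=> hf; have h := isd_mul hf hf.
have -> : (fun y => f y ^+ 2) = (fun y => f y * f y) by apply: funext => y; rewrite expr2.
apply: isd_eq h _.
by rewrite -mulrA mulr2n mulrDl mul1r.
Qed.
End S.

Lemma isd_id (K : numClosedFieldType) (x v : K) : ID x v (fun y => y) v.
Proof. apply: is_ID; exact: is_derive_id. Qed.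

Ltac isd := lazymatch goal with
 | |- ID _ _ (fun _ => ?c) _ => apply: isd_cst
 | |- ID _ _ (fun y => y) _ => apply: isd_id
 | |- ID _ _ (fun y => @?f y + @?g y) _ => apply: (isd_add (f:=f) (g:=g)); [isd|isd]
 | |- ID _ _ (fun y => - @?f y) _ => apply: (isd_opp (f:=f)); isd
 | |- ID _ _ (fun y => @?f y * @?g y) _ => apply: (isd_mul (f:=f) (g:=g)); [isd|isd]
 | |- ID _ _ (fun y => (@?f y) ^+ 2) _ => apply: (isd_exp2 (f:=f)); isd
 | |- ID _ _ (fun y => (@?f y)^-1) _ => apply: (isd_inv (f:=f)); [try assumption|isd]
 | |- ID ?x ?v (fun z => ?f (old_time z)) _ => match goal with H : ID _ _ (fun z => f (old_time z)) _ |- _ => exact H end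
 | |- _ => eassumption
 end.


Section T.
Variable K : numClosedFieldType.

Definition WW (q1 p1 q2 p2 t s : K) : K :=
  2 * (s - 1) * p1 * p2 / ((t - s) * (t - 1))
  - (t * p1 ^+ 2 + s * p2 ^+ 2) / (t * (t - s))
  + (2 * q1 * p1 + q2 * p2) * p2 / (t * (t - 1)).

Definition FQ1 (a1 a2 a3 a4 a5 a6 q1 p1 q2 p2 t s : K) : K :=
  (p1 ^+ 2 * ((q1 - 1) * q1 + (q1 - t) * q1 + (q1 - t) * (q1 - 1)) - ((a4 + a6 - 1) * (2 * q1 - 1) + a5 * (2 * q1 - t) + a3 * (2 * q1 - t - 1)) * p1 + a1 * (a2 + a1)) / (t * (t - 1))
  + (2 * a1 + a2) * (q2 * p2 / (t * (t - 1)))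
  + a4 * (s * (p2 - p1) / (t * (t - s)))
  + WW q1 p1 q2 p2 t s * q2 + q1 * q2 * (2 * p1 * p2 / (t * (t - 1))).
Definition FP1 (a1 a2 a3 a4 a5 a6 q1 p1 q2 p2 t s : K) : K :=
  (2 * p1 * (q1 - t) * (q1 - 1) * q1 - ((a4 + a6 - 1) * (q1 - 1) * q1 + a5 * (q1 - t) * q1 + a3 * (q1 - t) * (q1 - 1))) / (t * (t - 1))
  + a3 * q2 / (t - s) - a4 * s * q1 / (t * (t - s))
  + q1 * q2 * (2 * (s - 1) * p2 / ((t - s) * (t - 1)) - 2 * t * p1 / (t * (t - s)) + 2 * q1 * p2 / (t * (t - 1))).
Definition FQ2 (a1 a2 a3 a4 a5 a6 q1 p1 q2 p2 t s : K) : K :=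
  (2 * a1 + a2) * (q1 * p2 / (t * (t - 1))) + a3 * (p1 / (t - s) - (s - 1) * p2 / ((t - s) * (t - 1)))
  + WW q1 p1 q2 p2 t s * q1 + q1 * q2 * (p2 ^+ 2 / (t * (t - 1))).
Definition FP2 (a1 a2 a3 a4 a5 a6 q1 p1 q2 p2 t s : K) : K :=
  (2 * a1 + a2) * (q1 * q2 / (t * (t - 1))) - a3 * (s - 1) * q2 / ((t - s) * (t - 1)) + a4 * s * q1 / (t * (t - s))
  + q1 * q2 * (2 * (s - 1) * p1 / ((t - s) * (t - 1)) - 2 * s * p2 / (t * (t - s)) + (2 * q1 * p1 + 2 * q2 * p2) / (t * (t - 1))).

Lemma dH1_q1 (a1 a2 a3 a4 a5 a6 q1 p1 q2 p2 t s : K) :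
  'D_1 (fun y => H1 a1 a2 a3 a4 a5 a6 y p1 q2 p2 t s) q1 = FQ1 a1 a2 a3 a4 a5 a6 q1 p1 q2 p2 t s.
Proof.
have [_ ->] // : ID q1 1 (fun y => H1 a1 a2 a3 a4 a5 a6 y p1 q2 p2 t s) (FQ1 a1 a2 a3 a4 a5 a6 q1 p1 q2 p2 t s).
rewrite /H1 /HVI; apply: isd_eq; first by isd.
rewrite /FQ1 /WW /=. ring.
Qed.
Lemma dH1_p1 (a1 a2 a3 a4 a5 a6 q1 p1 q2 p2 t s : K) :
  'D_1 (fun y => H1 a1 a2 a3 a4 a5 a6 q1 y q2 p2 t s) p1 = FP1 a1 a2 a3 a4 a5 a6 q1 p1 q2 p2 t s.
Proof.
have [_ ->] // : ID p1 1 (fun y => H1 a1 a2 a3 a4 a5 a6 q1 y q2 p2 t s) (FP1 a1 a2 a3 a4 a5 a6 q1 p1 q2 p2 t s).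
rewrite /H1 /HVI; apply: isd_eq; first by isd.
rewrite /FP1 /WW /=. ring.
Qed.
Lemma dH1_q2 (a1 a2 a3 a4 a5 a6 q1 p1 q2 p2 t s : K) :
  'D_1 (fun y => H1 a1 a2 a3 a4 a5 a6 q1 p1 y p2 t s) q2 = FQ2 a1 a2 a3 a4 a5 a6 q1 p1 q2 p2 t s.
Proof.
have [_ ->] // : ID q2 1 (fun y => H1 a1 a2 a3 a4 a5 a6 q1 p1 y p2 t s) (FQ2 a1 a2 a3 a4 a5 a6 q1 p1 q2 p2 t s).
rewrite /H1 /HVI; apply: isd_eq; first by isd.
rewrite /FQ2 /WW /=. ring.
Qed.
Lemma dH1_p2 (a1 a2 a3 a4 a5 a6 q1 p1 q2 p2 t s : K) :
  'D_1 (fun y => H1 a1 a2 a3 a4 a5 a6 q1 p1 q2 y t s) p2 = FP2 a1 a2 a3 a4 a5 a6 q1 p1 q2 p2 t s.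
Proof.
have [_ ->] // : ID p2 1 (fun y => H1 a1 a2 a3 a4 a5 a6 q1 p1 q2 y t s) (FP2 a1 a2 a3 a4 a5 a6 q1 p1 q2 p2 t s).
rewrite /H1 /HVI; apply: isd_eq; first by isd.
rewrite /FP2 /WW /=. ring.
Qed.
End T.

Section C.
Variable K : numClosedFieldType.

Lemma lin_fst : linear (fun z : K * K => z.1). Proof. by move=> a u w. Qed.
Lemma lin_snd : linear (fun z : K * K => z.2). Proof. by move=> a u w. Qed.

Lemma diff_fst (x : K * K) : differentiable (fun z : K * K => z.1) x /\
  'd (fun z : K * K => z.1) x = (fun z : K * K => z.1) :> (K * K -> K).
Proof.
pose d := (fun z : K * K => z.1).
have ld : linear d by move=> a u w.
pose lM := GRing.isLinear.Build _ _ _ _ _ ld.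
pose L : {linear _ -> _} := HB.pack d lM.
have c : continuous L by move=> y; exact: cvg_fst.
split; first exact: (@linear_differentiable _ _ _ L).
exact: (@diff_lin _ _ _ L).
Qed.
Lemma diff_snd (x : K * K) : differentiable (fun z : K * K => z.2) x /\
  'd (fun z : K * K => z.2) x = (fun z : K * K => z.2) :> (K * K -> K).
Proof.
pose d := (fun z : K * K => z.2).
have ld : linear d by move=> a u w.
pose lM := GRing.isLinear.Build _ _ _ _ _ ld.
pose L : {linear _ -> _} := HB.pack d lM.
have c : continuous L by move=> y; exact: cvg_snd.
split; first exact: (@linear_differentiable _ _ _ L).
exact: (@diff_lin _ _ _ L).
Qed.

Lemma ID_fst (x v : K * K) : ID x v (fun z => z.1) v.1.
Proof.
have [d e] := diff_fst x; split; first exact: diff_derivable.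
by rewrite deriveE // e.
Qed.
Lemma ID_snd (x v : K * K) : ID x v (fun z => z.2) v.2.
Proof.
have [d e] := diff_snd x; split; first exact: diff_derivable.
by rewrite deriveE // e.
Qed.

Lemma diff_ot1 (y : K * K) : y.1 != 0 -> differentiable (fun z : K * K => z.2 / z.1) y.
Proof.
move=> y1.
apply: (@differentiableM _ _ (fun z : K * K => z.2) (fun z : K * K => (z.1)^-1)).
  exact: (diff_snd y).1.
exact: (@differentiableV _ _ (fun z : K * K => z.1) _ (diff_fst y).1).
Qed.
Lemma diff_ot2 (y : K * K) : y.1 != 0 -> differentiable (fun z : K * K => 1 / z.1) y.
Proof.
move=> y1.
apply: (@differentiableM _ _ (fun z : K * K => 1) (fun z : K * K => (z.1)^-1)).
  exact: differentiable_cst.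
exact: (@differentiableV _ _ (fun z : K * K => z.1) _ (diff_fst y).1).
Qed.

Lemma diff_ot (y : K * K) : y.1 != 0 -> differentiable (old_time (K:=K)) y.
Proof.
move=> y1.
exact: (@differentiable_pair _ _ _ _ (fun z : K * K => z.2 / z.1) (fun z : K * K => 1 / z.1) _ (diff_ot1 y1) (diff_ot2 y1)).
Qed.
Lemma dlin2 (c1 c2 : K) (f : K * K -> K) x : 'd f x (c1, c2) = c1 * 'd f x (1, 0) + c2 * 'd f x (0, 1).
Proof.
have -> : (c1, c2) = c1 *: ((1, 0) : K * K) + c2 *: (0, 1).
  by congr pair; rewrite /= ?scaler0 ?addr0 ?add0r [_%:A]mulr1.
rewrite linearD !linearZ; reflexivity.
Qed.

Lemma ID_comp (f : K * K -> K) (y v : K * K) c1 c2 : y.1 != 0 ->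
  differentiable f (old_time y) ->
  ID y v (fun z => z.2 / z.1) c1 -> ID y v (fun z => 1 / z.1) c2 ->
  ID y v (fun z => f (old_time z))
     (c1 * 'D_(1, 0) f (old_time y) + c2 * 'D_(0, 1) f (old_time y)).
Proof.
move=> y1 df [_ e1] [_ e2].
have dot := diff_ot y1.
have dc : differentiable (f \o old_time (K:=K)) y by exact: differentiable_comp.
split; first exact: diff_derivable.
have -> : 'D_v (fun z => f (old_time z)) y = 'D_v (f \o old_time (K:=K)) y by [].
rewrite (deriveE _ dc) (diff_comp dot df).
rewrite /comp /old_time /= (diff_pair (diff_ot1 y1) (diff_ot2 y1)) /=.
have E1 : 'd (fun z : K * K => z.2 / z.1) y v = c1.
  by rewrite -e1; apply/esym/deriveE/diff_ot1.
have E2 : 'd (fun z : K * K => 1 / z.1) y v = c2.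
  by rewrite -e2; apply/esym/deriveE/diff_ot2.
have -> : ('d (fun z : K * K => z.2 / z.1) y v, 'd (fun z : K * K => 1 / z.1) y v) = (c1, c2).
  by rewrite E1 E2.
rewrite dlin2.
by congr (_ * _ + _ * _); apply/esym/deriveE; exact: df.
Qed.
End C.

Arguments old_time : simpl never.
Section E.
Variable K : numClosedFieldType.

Lemma goal_from_ID (x v : K * K) (f : K * K -> K) df rhs :
  ID x v f df -> df = rhs -> 'D_v f x = rhs.
Proof. by case=> _ -> ->. Qed.

Lemma ID_ot1 (y v : K * K) : y.1 != 0 ->
  ID y v (fun z => z.2 / z.1) ((y.1 * v.2 - y.2 * v.1) / y.1 ^+ 2).
Proof.
move=> y1; apply: isd_eq.
  have := ID_fst y v; have := ID_snd y v => h1 h2; isd.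
rewrite /=; field; exact: y1.
Qed.
Lemma ID_ot2 (y v : K * K) : y.1 != 0 ->
  ID y v (fun z => 1 / z.1) (- v.1 / y.1 ^+ 2).
Proof.
move=> y1; apply: isd_eq.
  have := ID_fst y v => h1; isd.
rewrite /=; field; exact: y1.
Qed.

Lemma ID_at (f : K * K -> K) (y v : K * K) : y.1 != 0 ->
  differentiable f (old_time y) ->
  ID y v (fun z => f (old_time z))
     ((y.1 * v.2 - y.2 * v.1) / y.1 ^+ 2 * 'D_(1, 0) f (old_time y) + (- v.1 / y.1 ^+ 2) * 'D_(0, 1) f (old_time y)).
Proof. move=> y1 df; apply: ID_comp => //; [exact: ID_ot1 | exact: ID_ot2]. Qed.

End E.

Section O.
Variable K : numClosedFieldType.

Lemma BT_dom_open (U : set (K * K)) (q2 : K * K -> K) :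
  open U -> (forall x, U x -> differentiable q2 x) -> open (BT_dom U q2).
Proof.
move=> oU dq; rewrite openE => y [y1 [Uy qy]].
have cf : {for y, continuous (fun z : K * K => z.1)}.
  exact/differentiable_continuous/(diff_fst y).1.
have cot : {for y, continuous (old_time (K:=K))}.
  exact/differentiable_continuous/diff_ot.
have cq : {for y, continuous (q2 \o old_time (K:=K))}.
  apply/differentiable_continuous/differentiable_comp; first exact: diff_ot.
  exact: dq.
rewrite /interior /=.
have N1 : \forall z \near y, z.1 != 0.
  exact: (cvgr_neq0 _ cf y1).
have N2 : \forall z \near y, q2 (old_time z) != 0.
  exact: (cvgr_neq0 _ cq qy).
have N3 : \forall z \near y, U (old_time z).
  apply: cot; apply: open_nbhs_nbhs; split => //.
near=> z; split; [near: z; exact: N1|split; [near: z; exact: N3|near: z; exact: N2]].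
Unshelve. all: by end_near.
Qed.
End O.


Ltac dif := lazymatch goal with
 | |- differentiable (fun _ => ?c) _ => apply: differentiable_cst
 | |- differentiable (fun y => @?f y + @?g y) _ => apply: (differentiableD (f:=f) (g:=g)); [dif|dif]
 | |- differentiable (fun y => - @?f y) _ => apply: (differentiableN (f:=f)); dif
 | |- differentiable (fun y => @?f y * @?g y) _ => apply: (differentiableM (f:=f) (g:=g)); [dif|dif]
 | |- differentiable (fun y => (@?f y)^-1) _ => apply: (differentiableV (f:=f)); [dif|try assumption]
 | |- _ => eassumption
 end.

Ltac nz := rewrite ?mulN1r ?subr_eq0; repeat (apply/andP; split); try done;
  rewrite eq_sym; done.

Section M.
Variable K : numClosedFieldType.

Lemma dom_facts (y : K * K) : y.1 != 0 -> garnier_domain (old_time y) -> garnier_domain y.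
Proof.
case: y => T S /= y1; rewrite /garnier_domain /old_time /=.
case=> h1 h2 h3 h4 h5; split => //.
- by apply: contra h4 => /eqP ->; rewrite divr1.
- by apply: contra h1 => /eqP ->; rewrite mul0r.
- by apply: contra h5 => /eqP ->.
- by apply: contra h2 => /eqP <-; rewrite divff.
Qed.

Lemma part1 (a1 : K) (x : phase K) :
  c_p1 x != 0 -> c_q2 x != 0 -> c_t x != 0 -> c_s x != 0 ->
  R'_map a1 (S_map a1 x) = BT a1 x.
Proof.
case: x => q1 p1 q2 p2 t s /= hp hq ht hs.
rewrite /S_map /R'_map /BT.
congr Phase.
- by field; rewrite hp hq.
- by field.
- by field; rewrite hp hq.
- by rewrite mulrC.
- by field; rewrite hs ht.
Qed.

End M.

Unset Implicit Arguments.

Theorem mainTheorem4 (K : numClosedFieldType) (a1 a2 a3 a4 a5 a6 : K) :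
  2 * a1 + a2 + a3 + a4 + a5 + a6 = 1 ->
  (forall x : phase K,
     c_p1 x != 0 -> c_q2 x != 0 -> c_t x != 0 -> c_s x != 0 ->
     R'_map a1 (S_map a1 x) = BT a1 x) /\
  (forall (U : set (K * K)) (q1 p1 q2 p2 : K * K -> K),
     garnier_solution a1 a2 a3 a4 a5 a6 U q1 p1 q2 p2 ->
     (forall y, BT_dom U q2 y ->
        (c_t (BT_sol a1 q1 p1 q2 p2 y), c_s (BT_sol a1 q1 p1 q2 p2 y)) = y) /\
     garnier_solution a1 a4 a2 a3 a5 a6 (BT_dom U q2)
       (fun y => c_q1 (BT_sol a1 q1 p1 q2 p2 y))
       (fun y => c_p1 (BT_sol a1 q1 p1 q2 p2 y))
       (fun y => c_q2 (BT_sol a1 q1 p1 q2 p2 y))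
       (fun y => c_p2 (BT_sol a1 q1 p1 q2 p2 y))).
Proof.
move=> ha; split; first exact: part1.
move=> U q1 p1 q2 p2 [oU sU Hsol]; split.
  case=> T S [/= y1 _]; rewrite /BT_sol /BT /old_time /=.
  by congr pair; field.
have -> : (fun y => c_q1 (BT_sol a1 q1 p1 q2 p2 y)) = (fun z => 1 / q2 (old_time z)) by [].
have -> : (fun y => c_p1 (BT_sol a1 q1 p1 q2 p2 y)) =
  (fun z => - ((q1 (old_time z) * p1 (old_time z) + q2 (old_time z) * p2 (old_time z) + a1) * q2 (old_time z))) by [].
have -> : (fun y => c_q2 (BT_sol a1 q1 p1 q2 p2 y)) = (fun z => - (q1 (old_time z) / q2 (old_time z))) by [].
have -> : (fun y => c_p2 (BT_sol a1 q1 p1 q2 p2 y)) = (fun z => - (p1 (old_time z) * q2 (old_time z))) by [].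
split.
- apply: BT_dom_open => // x Ux.
  by move: (Hsol x Ux) => /= [[]].
- move=> y [y1 [Uy _]]; apply: dom_facts => //; exact: sU.
- case=> T S [/= y1 [Uy qy]].
  have [g1 g2 g3 g4 g5] := dom_facts (y:=(T,S)) y1 (sU _ Uy).
  move: (Hsol _ Uy) => /= [[d1 d2 d3 d4] [e1 e2 e3 e4] [f1 f2 f3 f4]].
  have ha6 : a6 = 1 - 2 * a1 - a2 - a3 - a4 - a5.
    move/eqP: ha; rewrite -subr_eq0 => /eqP h.
    by apply/eqP; rewrite -subr_eq0; apply/eqP; rewrite -h; ring.
  have A1 := ID_at (y:=(T,S)) (1,0) y1 d1. have B1 := ID_at (y:=(T,S)) (0,1) y1 d1.
  have A2 := ID_at (y:=(T,S)) (1,0) y1 d2. have B2 := ID_at (y:=(T,S)) (0,1) y1 d2.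
  have A3 := ID_at (y:=(T,S)) (1,0) y1 d3. have B3 := ID_at (y:=(T,S)) (0,1) y1 d3.
  have A4 := ID_at (y:=(T,S)) (1,0) y1 d4. have B4 := ID_at (y:=(T,S)) (0,1) y1 d4.
  rewrite /dp1 /dq1 /dp2 /dq2 /H2 in e1 e2 e3 e4 f1 f2 f3 f4.
  rewrite dH1_p1 in e1. rewrite dH1_q1 in e2. rewrite dH1_p2 in e3. rewrite dH1_q2 in e4.
  rewrite dH1_p2 in f1. rewrite dH1_q2 in f2. rewrite dH1_p1 in f3. rewrite dH1_q1 in f4.
  rewrite e1 f1 in A1 B1. rewrite e2 f2 in A2 B2. rewrite e3 f3 in A3 B3. rewrite e4 f4 in A4 B4.
  have D1 : differentiable (fun z => q1 (old_time z)) (T,S) by exact: differentiable_comp (diff_ot (y:=(T,S)) y1) d1.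
  have D2 : differentiable (fun z => p1 (old_time z)) (T,S) by exact: differentiable_comp (diff_ot (y:=(T,S)) y1) d2.
  have D3 : differentiable (fun z => q2 (old_time z)) (T,S) by exact: differentiable_comp (diff_ot (y:=(T,S)) y1) d3.
  have D4 : differentiable (fun z => p2 (old_time z)) (T,S) by exact: differentiable_comp (diff_ot (y:=(T,S)) y1) d4.
  have qy' := qy; rewrite /old_time /= in qy'.
  clear e1 e2 e3 e4 f1 f2 f3 f4 Hsol.
  cbv zeta.
  split; [split; dif| |].
  + clear B1 B2 B3 B4; split.
    1: (apply: goal_from_ID; [by isd | ]).
    2: (apply: goal_from_ID; [by isd | ]).
    3: (apply: goal_from_ID; [by isd | ]).
    4: (apply: goal_from_ID; [by isd | ]).
    1: rewrite /dp1 dH1_p1.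
    2: rewrite /dq1 dH1_q1.
    3: rewrite /dp2 dH1_p2.
    4: rewrite /dq2 dH1_q2.
    1-4: rewrite /FQ1 /FP1 /FQ2 /FP2 /WW /old_time /= ha6.
    1-4: field; nz.
  + clear A1 A2 A3 A4; split.
    1: (apply: goal_from_ID; [by isd | ]).
    2: (apply: goal_from_ID; [by isd | ]).
    3: (apply: goal_from_ID; [by isd | ]).
    4: (apply: goal_from_ID; [by isd | ]).
    1: rewrite /dp1 /H2 dH1_p2.
    2: rewrite /dq1 /H2 dH1_q2.
    3: rewrite /dp2 /H2 dH1_p1.
    4: rewrite /dq2 /H2 dH1_q1.
    1-4: rewrite /FQ1 /FP1 /FQ2 /FP2 /WW /old_time /= ha6.
    1-4: field; nz.
Qed.
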